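(* Let $c\ge 1$ be an integer and consider the equivalence relation on $S_n$ generated by the replacement partition of $S_{c+1}$ whose only nontrivial part is $\{x\in S_{c+1}: x_1=1\}$. Let $f(n)$ denote the number of equivalence classes in $S_n$ (with $f(0)=1$), and for positive integers $k,n$ let $g(k,n)$ be the number of classes in $S_n$ containing at least one $k$-squished permutation. Then $$f(n)=\begin{cases} n!, & n<c+1,\\ \displaystyle\sum_{j=1}^{n} f(j-1)\, g(1,n-j+1)\binom{n-1}{j-1}, & n\ge c+1.\end{cases}$$
   Context: Permutations are written in one-line notation as words. The order permutation (standardization) of a word $u$ of distinct positive integers of length $\ell$ is the unique $\pi\in S_\ell$ with $\pi_i<\pi_j$ iff $u_i<u_j$. The equivalence is generated by declaring $\phi\equiv\psi$ whenever $\phi=aub$ and $\psi=avb$ for words $a,b,u,v$ with $u,v$ of length $c+1$ whose order permutations both begin with $1$ (i.e., the first letter of $u$ is the smallest letter of $u$, and likewise for $v$). A permutation of $S_n$ is $k$-squished if for each $j\le k$, the letter $j$ occurs among the first $c(j-1)+1$ positions. *)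

(* Defs.v *)
From Stdlib Require Import Relations ClassicalEpsilon.
From mathcomp Require Import all_boot all_fingroup.
Set Implicit Arguments. Unset Strict Implicit. Unset Printing Implicit Defensive.

Definition word n (s : 'S_n) : seq nat := [seq (s i).+1 | i <- enum 'I_n].

(* The order permutation of u begins with 1: u is nonempty and its first
   letter is smaller than all its other letters. *)
Definition first_min (u : seq nat) : bool :=
  if u is x :: u' then all (fun y => x < y) u' else false.

Definition step (c : nat) (phi psi : seq nat) : Prop :=
  exists a b u v : seq nat,
    [/\ phi = a ++ u ++ b, psi = a ++ v ++ b,
        size u = c.+1 /\ size v = c.+1 & first_min u /\ first_min v].

Definition equiv (c n : nat) : relation 'S_n :=
  clos_refl_sym_trans 'S_n (fun s t => step c (word s) (word t)).

Definition equivb (c n : nat) (s t : 'S_n) : bool :=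
  if excluded_middle_informative (equiv c s t) then true else false.

Definition classes (c n : nat) : {set {set 'S_n}} :=
  [set [set t | equivb c s t] | s : 'S_n].

Definition f (c n : nat) : nat := #|classes c n|.

Definition squished (c k n : nat) (s : 'S_n) : bool :=
  [forall j : 'I_k.+1, (0 < j) ==> (nat_of_ord j \in take (c * j.-1).+1 (word s))].

Definition g (c k n : nat) : nat :=
  #|[set C in classes c n | [exists s in C, squished c k s]]|.

(* Main.v *)
From Stdlib Require Import Relations ClassicalEpsilon.
Require Import Defs.
From mathcomp Require Import all_boot all_fingroup zify.
Set Implicit Arguments. Unset Strict Implicit. Unset Printing Implicit Defensive.


Section Words.
Variable c : nat.

Definition stp (x y : seq nat) : Prop :=
  exists a b u v : seq nat, [/\ x = a ++ u ++ b, y = a ++ v ++ b, size u = c.+1,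
     first_min u & first_min v /\ perm_eq u v].

Definition E := clos_refl_trans (seq nat) stp.

Lemma stp_sym x y : stp x y -> stp y x.
Proof.
case=> a [b] [u] [v] [-> -> su fu [fv puv]].
exists a, b, v, u; split=> //; first by rewrite -(perm_size puv).
by split=> //; rewrite perm_sym.
Qed.

Lemma stp_perm x y : stp x y -> perm_eq x y.
Proof.
case=> a [b] [u] [v] [-> -> su fu [fv puv]].
by rewrite perm_cat2l perm_cat2r.
Qed.

Lemma E_refl x : E x x. Proof. exact: rt_refl. Qed.
Lemma E_trans x y z : E x y -> E y z -> E x z. Proof. exact: rt_trans. Qed.
Lemma E_stp x y : stp x y -> E x y. Proof. exact: rt_step. Qed.
Lemma E_sym x y : E x y -> E y x.
Proof.
elim=> [{}x {}y /stp_sym/E_stp //| {}x | {}x {}y z _ H1 _ H2]; first exact: E_refl.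
exact: E_trans H2 H1.
Qed.
Lemma E_perm x y : E x y -> perm_eq x y.
Proof.
elim=> [{}x {}y /stp_perm //| {}x | {}x {}y z _ H1 _ H2] //.
exact: perm_trans H1 H2.
Qed.

Lemma E_catl a x y : E x y -> E (a ++ x) (a ++ y).
Proof.
elim=> [{}x {}y | {}x | {}x {}y z _ H1 _ H2]; last exact: E_trans H1 H2; last exact: E_refl.
case=> a' [b] [u] [v] [-> -> su fu fv]; apply: E_stp.
by exists (a ++ a'), b, u, v; rewrite !catA.
Qed.

Lemma E_catr b x y : E x y -> E (x ++ b) (y ++ b).
Proof.
elim=> [{}x {}y | {}x | {}x {}y z _ H1 _ H2]; last exact: E_trans H1 H2; last exact: E_refl.
case=> a [b'] [u] [v] [-> -> su fu fv]; apply: E_stp.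
by exists a, (b' ++ b), u, v; rewrite -!catA.
Qed.

Lemma first_min_map (f : nat -> nat) (L : seq nat) u :
  {in L &, forall x y, x < y -> f x < f y} -> all (mem L) u ->
  first_min u -> first_min (map f u).
Proof.
move=> mono; case: u => //= x u /andP[xL uL] /allP H.
apply/allP=> _ /mapP[y yu ->]; apply: mono => //; first by move/allP: uL; apply.
exact: H.
Qed.

Lemma E_map (f : nat -> nat) (L : seq nat) x y :
  {in L &, forall x y, x < y -> f x < f y} -> all (mem L) x ->
  E x y -> E (map f x) (map f y).
Proof.
move=> mono xL0 H0; have H := @clos_rt_rt1n _ _ _ _ H0; clear H0; elim: H xL0 => [{}x _ | {}x {}y z st _ IH xL]; first exact: E_refl.
have yL : all (mem L) y by rewrite -(perm_all _ (stp_perm st)).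
apply: E_trans (IH yL); apply: E_stp.
move: st xL => [a [b [u [v [-> -> su fu [fv puv]]]]]].
rewrite !all_cat => /and3P[_ uL _].
have vL : all (mem L) v by rewrite -(perm_all _ puv).
exists (map f a), (map f b), (map f u), (map f v); rewrite !map_cat; split=> //.
- by rewrite size_map.
- exact: first_min_map mono uL fu.
- split; [exact: first_min_map mono vL fv | exact: perm_map].
Qed.

Lemma stp_split m p q y : all (fun l => m < l) p -> all (fun l => m < l) q ->
  stp (p ++ m :: q) y ->
  exists p1 q1, [/\ y = p1 ++ m :: q1, size p1 = size p, E p p1 & E (m :: q) (m :: q1)].
Proof.
move=> /allP pm /allP qm [a [b [u [v [e -> su fu [fv puv]]]]]].
have [h1|h1] := leqP (size (a ++ u)) (size p).
  have e2 : take (size (a ++ u)) p ++ (drop (size (a ++ u)) p ++ m :: q) = (a ++ u) ++ b.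
    by rewrite catA cat_take_drop e catA.
  move: e2 => /eqP; rewrite eqseq_cat; last by rewrite size_take_min; apply/minn_idPl.
  case/andP=> /eqP e3 /eqP e4.
  exists (a ++ v ++ drop (size (a ++ u)) p), q; split.
  - by rewrite -e4 -!catA.
  - have hs : size p = size (a ++ u) + size (drop (size (a ++ u)) p).
      by rewrite -{1}(cat_take_drop (size (a ++ u)) p) size_cat e3.
    by rewrite hs !size_cat (perm_size puv) addnA.
  - apply: E_stp; exists a, (drop (size (a ++ u)) p), u, v; split=> //.
    by rewrite -{1}(cat_take_drop (size (a ++ u)) p) e3 catA.
  - exact: E_refl.
have [h2|h2] := leqP (size p) (size a).
  have e2 : p ++ m :: q = take (size p) a ++ (drop (size p) a ++ u ++ b).
    by rewrite catA cat_take_drop.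
  move/eqP: e2; rewrite eqseq_cat; last by rewrite size_take_min (minn_idPl h2).
  case/andP=> /eqP e3 /eqP e4.
  case ed: (drop (size p) a) e4 => [|x a'] e4.
    clear e h1; case: u su fu puv e4 => // u0 u' su fu puv [e5 e6]; subst u0.
    case: v fv puv => [|v0 v'] fv puv; first by move/perm_size: puv.
    have v0m : v0 = m.
      apply/eqP; apply: contraT => ne.
      have mv : m \in v0 :: v' by rewrite -(perm_mem puv) mem_head.
      have mv' : m \in v' by move: mv; rewrite in_cons eq_sym (negbTE ne).
      have v0u : v0 \in m :: u' by rewrite (perm_mem puv) mem_head.
      have v0u' : v0 \in u' by move: v0u; rewrite in_cons (negbTE ne).
      have h3 : v0 < m by move/allP: fv; apply.
      have h4 : m < v0 by move/allP: fu; apply.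
      lia.
    subst v0.
    exists p, (v' ++ b); split=> //.
    - by rewrite -(cat_take_drop (size p) a) -e3 ed cats0.
    - exact: E_refl.
    - apply: E_stp; exists [::], b, (m :: u'), (m :: v'); split=> //.
      by rewrite e6.
  case: e4 => e5 e6; subst x.
  exists p, (a' ++ v ++ b); split=> //.
  - by rewrite -(cat_take_drop (size p) a) -e3 ed -!catA.
  - exact: E_refl.
  - apply: E_stp; exists (m :: a'), b, u, v; split=> //.
    by rewrite e6.
exfalso.
case: u su fu puv e h1 => // u0 u' su fu puv e h1.
have e1 := congr1 (nth 0 ^~ (size p)) e.
have e2 := congr1 (nth 0 ^~ (size a)) e.
move: e1 e2 => /=; rewrite !nth_cat ltnn subnn /= ltnn subnn /= h2.
have -> : size p < size a = false by apply/negbTE; rewrite -leqNgt; exact: ltnW.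
move: h1; rewrite size_cat /= => h1.
have h3 : size p - size a < (size u').+1 by lia.
case ek : (size p - size a) => [|k]; first by move/eqP: ek; rewrite subn_eq0 leqNgt h2.
have hk : k < size u' by rewrite -ltnS -ek.
rewrite /= nth_cat hk => e1 e2.
have km : m \in u' by rewrite e1 mem_nth.
have h4 : u0 < m by move/allP: fu; apply.
have h5 : m < u0 by rewrite -e2; apply: pm; rewrite mem_nth.
by move: (ltn_trans h4 h5); rewrite ltnn.
Qed.

Lemma E_split m p q z : all (fun l => m < l) p -> all (fun l => m < l) q ->
  E (p ++ m :: q) z ->
  exists p1 q1, [/\ z = p1 ++ m :: q1, size p1 = size p, E p p1 & E (m :: q) (m :: q1)].
Proof.
move=> pm qm H0; have H := @clos_rt_rt1n _ _ _ _ H0; clear H0.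
have : forall w, w = p ++ m :: q -> clos_refl_trans_1n _ stp w z.
  by move=> w ->.
move=> /(_ _ erefl) {}H; move: H.
move Hw : (p ++ m :: q) => w H.
elim: H p q Hw pm qm => [x | x y z0 st _ IH] p q ew pm qm.
  by exists p, q; split=> //; apply: E_refl.
rewrite -ew in st; have [p1 [q1 [ey sp E1 E2]]] := stp_split pm qm st.
have pm1 : all (fun l => m < l) p1 by rewrite -(perm_all _ (E_perm E1)).
have qm1 : all (fun l => m < l) q1.
  by have := E_perm E2; rewrite perm_cons => /perm_all <-.
have [p2 [q2 [ez sp2 E3 E4]]] := IH p1 q1 (esym ey) pm1 qm1.
exists p2, q2; split=> //; first by rewrite sp2.
- exact: E_trans E1 E3.
- exact: E_trans E2 E4.
Qed.

Lemma E_join p p1 q q1 : E p p1 -> E q q1 -> E (p ++ q) (p1 ++ q1).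
Proof. by move=> H1 H2; apply: E_trans (E_catr q H1) (E_catl p1 H2). Qed.
End Words.


Definition Eb c (x y : seq nat) : bool :=
  if excluded_middle_informative (E c x y) then true else false.

Lemma EbP c x y : reflect (E c x y) (Eb c x y).
Proof. by rewrite /Eb; case: excluded_middle_informative => h; constructor. Qed.

Lemma size_word n (s : 'S_n) : size (word s) = n.
Proof. by rewrite size_map size_enum_ord. Qed.

Lemma word_perm n (s : 'S_n) : perm_eq (word s) (iota 1 n).
Proof.
apply: uniq_perm; last 1 first.
- move=> x; rewrite mem_iota; apply/mapP/idP.
    by case=> i _ ->; rewrite add1n ltnS; apply/andP; split=> //; exact: ltn_ord.
  case: x => // y; rewrite add1n !ltnS => /andP[_ hy].
  exists (s^-1 (Ordinal hy))%g; first by rewrite mem_enum.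
  by rewrite permKV.
- rewrite map_inj_uniq ?enum_uniq // => i j /eq_add_S /val_inj; exact: perm_inj.
- exact: iota_uniq.
Qed.

Lemma nth_word n (s : 'S_n) (i : 'I_n) : nth 0 (word s) i = (s i).+1.
Proof. by rewrite (nth_map i) ?size_enum_ord // nth_ord_enum. Qed.

Lemma word_inj n : injective (@word n).
Proof.
move=> s t e; apply/permP => i; apply/val_inj/eq_add_S.
by rewrite -!nth_word e.
Qed.

Lemma word_surj n w : perm_eq w (iota 1 n) -> exists s : 'S_n, word s = w.
Proof.
move=> pw.
have U : uniq [seq word s | s <- enum 'S_n] by rewrite map_inj_uniq ?enum_uniq //; exact: word_inj.
have S : {subset [seq word s | s <- enum 'S_n] <= permutations (iota 1 n)}.
  by move=> _ /mapP[s _ ->]; rewrite mem_permutations word_perm.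
have Z : size (permutations (iota 1 n)) <= size [seq word s | s <- enum 'S_n].
  by rewrite size_permutations ?iota_uniq // size_iota size_map -cardE card_Sn.
have [_ /(_ w)] := uniq_min_size U S Z.
rewrite mem_permutations pw => /mapP[s _ ->]; by exists s.
Qed.

Definition permw n (w : seq nat) : 'S_n := odflt 1%g [pick s : 'S_n | word s == w].

Lemma permwK n w : perm_eq w (iota 1 n) -> word (permw n w) = w.
Proof.
move=> /word_surj[s es]; rewrite /permw; case: pickP => [t /eqP //|/(_ s)].
by rewrite es eqxx.
Qed.

Lemma word_permw n (s : 'S_n) : permw n (word s) = s.
Proof. by apply: word_inj; rewrite permwK // word_perm. Qed.

Lemma equiv_E c n (s t : 'S_n) : Defs.equiv c s t <-> E c (word s) (word t).
Proof.
split.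
  elim=> [{}s {}t | {}s | {}s {}t _ IH | {}s {}t r _ H1 _ H2].
  - case=> a [b] [u] [v] [e1 e2 [su sv] [fu fv]]; apply: E_stp.
    exists a, b, u, v; split=> //; split=> //.
    have : perm_eq (word s) (word t) by rewrite (perm_trans (word_perm s)) // perm_sym word_perm.
    by rewrite e1 e2 perm_cat2l perm_cat2r.
  - exact: E_refl.
  - exact: E_sym.
  - exact: E_trans H1 H2.
move=> H0; have H := @clos_rt_rt1n _ _ _ _ H0; clear H0.
move Hw : (word s) H => w H; move Hz : (word t) H => z H.
elim: H s Hw Hz => [x | x y z0 st _ IH] s' ew ez.
  by rewrite (word_inj (etrans ew (esym ez))); apply: rst_refl.
have py : perm_eq y (iota 1 n).
  by apply: (perm_trans _ (word_perm s')); rewrite ew perm_sym; exact: stp_perm st.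
have [t' et'] := word_surj py.
apply: rst_trans (IH t' et' ez); apply: rst_step.
move: st => [a [b [u [v [e1 e2 su [fu [fv puv]]]]]]].
exists a, b, u, v; split; rewrite ?ew ?et' //; split=> //.
by rewrite -(perm_size puv).
Qed.

Lemma equivb_E c n (s t : 'S_n) : equivb c s t = Eb c (word s) (word t).
Proof.
rewrite /equivb; case: excluded_middle_informative => h; case: EbP => // h'.
- by case: h'; apply/equiv_E.
- by case: h; apply/equiv_E.
Qed.


Definition SL n (A : {set 'I_n}) : seq nat := [seq (val i).+1 | i <- ord_enum n & i \in A].

Lemma SL_uniq n (A : {set 'I_n}) : uniq (SL A).
Proof.
rewrite map_inj_uniq ?filter_uniq ?ord_enum_uniq // => i j /eq_add_S; exact: val_inj.
Qed.

Lemma SL_sorted n (A : {set 'I_n}) : sorted ltn (SL A).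
Proof.
rewrite /SL sorted_map; apply: sorted_filter; first by move=> x y z /= h1 h2; exact: ltn_trans h1 h2.
rewrite -sorted_map.
have -> : [seq (val i).+1 | i <- ord_enum n] = map succn (iota 0 n) by rewrite -val_ord_enum -map_comp.
by rewrite sorted_map; apply: sub_sorted (iota_ltn_sorted 0 n) => x y /=; rewrite ltnS.
Qed.

Lemma mem_SL n (A : {set 'I_n}) (i : 'I_n) : ((val i).+1 \in SL A) = (i \in A).
Proof.
apply/mapP/idP => [[j] | iA]; last by exists i => //; rewrite mem_filter iA mem_ord_enum.
by rewrite mem_filter => /andP[jA _] /eq_add_S /val_inj ->.
Qed.

Lemma SL_range n (A : {set 'I_n}) x : x \in SL A -> exists2 i : 'I_n, x = (val i).+1 & i \in A.
Proof. by case/mapP=> i; rewrite mem_filter => /andP[iA _] ->; exists i. Qed.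

Lemma size_SL n (A : {set 'I_n}) : size (SL A) = #|A|.
Proof.
rewrite size_map cardE; apply: perm_size; apply: uniq_perm.
- by rewrite filter_uniq ?ord_enum_uniq.
- exact: enum_uniq.
- by move=> i; rewrite mem_filter mem_enum mem_ord_enum andbT.
Qed.

Definition relab (S w : seq nat) := [seq nth 0 S x.-1 | x <- w].
Definition std (S w : seq nat) := [seq (index x S).+1 | x <- w].

Lemma std_relab S w : uniq S -> all (fun x => 0 < x <= size S) w -> std S (relab S w) = w.
Proof.
move=> uS /allP H; rewrite /std /relab -map_comp -[RHS]map_id; apply/eq_in_map => x /H /andP[h1 h2] /=.
by rewrite index_uniq //; lia.
Qed.

Lemma relab_std S w : all (mem S) w -> relab S (std S w) = w.
Proof.
move=> /allP H; rewrite /std /relab -map_comp -[RHS]map_id; apply/eq_in_map => x /H xS /=.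
exact: nth_index.
Qed.

Lemma std_self S : uniq S -> std S S = iota 1 (size S).
Proof.
move=> uS; apply: (@eq_from_nth _ 0); first by rewrite size_map size_iota.
move=> i; rewrite size_map => hi.
by rewrite (nth_map 0) // index_uniq // nth_iota // add1n.
Qed.

Lemma relab_iota S : relab S (iota 1 (size S)) = S.
Proof.
apply: (@eq_from_nth _ 0); first by rewrite size_map size_iota.
move=> i; rewrite size_map size_iota => hi.
by rewrite (nth_map 0) ?size_iota // nth_iota.
Qed.

Lemma std_perm S w : uniq S -> perm_eq w S -> perm_eq (std S w) (iota 1 (size S)).
Proof. by move=> uS pw; rewrite -std_self //; apply: perm_map. Qed.

Lemma relab_perm S w : perm_eq w (iota 1 (size S)) -> perm_eq (relab S w) S.
Proof. by move=> pw; rewrite -{2}(relab_iota S); apply: perm_map. Qed.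

Lemma std_mono S : sorted ltn S ->
  {in S &, forall x y, x < y -> (fun z => (index z S).+1) x < (fun z => (index z S).+1) y}.
Proof.
move=> sS x y xS yS xy /=; rewrite ltnS.
case: (ltngtP (index x S) (index y S)) => // h.
  have := sorted_ltn_index ltn_trans sS y x yS xS h => h'; lia.
have : nth 0 S (index x S) = nth 0 S (index y S) by rewrite h.
rewrite !nth_index // => e; lia.
Qed.

Lemma relab_mono S : sorted ltn S ->
  {in iota 1 (size S) &, forall x y, x < y -> (fun z => nth 0 S z.-1) x < (fun z => nth 0 S z.-1) y}.
Proof.
move=> sS x y; rewrite !mem_iota => hx hy xy /=.
apply: (sorted_ltn_nth ltn_trans 0 sS); rewrite ?inE; lia.
Qed.


Lemma leq_card_imset_rel (T K1 K2 : finType) (D : {set T}) (F : T -> K1) (G : T -> K2) :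
  {in D &, forall s t, F s = F t -> G s = G t} -> #|G @: D| <= #|F @: D|.
Proof.
move=> FG; case: (set_0Vmem D) => [-> | [s0 s0D]]; first by rewrite !imset0 cards0.
pose H := fun x => if [pick s in D | F s == x] is Some s then G s else G s0.
suff -> : G @: D = H @: (F @: D) by apply: leq_imset_card.
apply/setP => y; apply/imsetP/imsetP.
- case=> s sD ->; exists (F s); first exact: imset_f.
  rewrite /H; case: pickP => [t /andP[tD /eqP e] | /(_ s)]; first by rewrite (FG _ _ tD sD e).
  by rewrite sD eqxx.
- case=> x /imsetP[s sD ->] ->; rewrite /H; case: pickP => [t /andP[tD _]| _].
    by exists t.
  by exists s0.
Qed.

Lemma card_imset_rel (T K1 K2 : finType) (D : {set T}) (F : T -> K1) (G : T -> K2) :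
  {in D &, forall s t, (F s == F t) = (G s == G t)} -> #|F @: D| = #|G @: D|.
Proof.
move=> FG; apply/eqP; rewrite eqn_leq; apply/andP; split; apply: leq_card_imset_rel.
- by move=> s t sD tD /eqP; rewrite -FG // => /eqP.
- by move=> s t sD tD /eqP; rewrite FG // => /eqP.
Qed.

Lemma card_imset_part (T I K : finType) (h : T -> I) (F : T -> K) :
  (forall s t, F s = F t -> h s = h t) ->
  #|F @: setT| = \sum_(i : I) #|F @: [set s | h s == i]|.
Proof.
move=> Fh.
rewrite (@card_imset_rel _ _ _ _ F (fun s => (h s, F s))); last first.
  move=> s t _ _; apply/eqP/eqP => [e | [] //]; by rewrite e (Fh _ _ e).
rewrite -sum1_card (partition_big (fun x => x.1) predT) //=.
apply: eq_bigr => i _.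
rewrite (@card_imset_rel _ _ _ _ F (fun s => (i, F s))); last first.
  by move=> s t _ _; apply/eqP/eqP => [-> | [] ->].
rewrite -sum1_card; apply: eq_bigl => x.
apply/andP/imsetP => [[/imsetP[s _ ->] /eqP /= e] | [s]].
  by exists s; rewrite ?inE ?e.
by rewrite inE => /eqP <- ->; split; [exact: imset_f | ].
Qed.

Definition cls c n (s : 'S_n) : {set 'S_n} := [set t | Eb c (word s) (word t)].

Lemma cls_eq c n (s t : 'S_n) : (cls c s == cls c t) = Eb c (word s) (word t).
Proof.
apply/eqP/EbP => [e | H].
  have : t \in cls c t by rewrite inE; apply/EbP; exact: E_refl.
  by rewrite -e inE => /EbP.
apply/setP => u; rewrite !inE; apply/EbP/EbP => H'.
  exact: E_trans (E_sym H) H'.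
exact: E_trans H H'.
Qed.

Lemma f_cls c n : f c n = #|[set cls c s | s in [set: 'S_n]]|.
Proof.
rewrite /Defs.f /Defs.classes.
have H : forall s : 'S_n, [set t | equivb c s t] = cls c s by move=> s; apply/setP => t; rewrite !inE equivb_E.
suff -> : [set [set t | equivb c s t] | s : 'S_n] = [set cls c s | s in [set: 'S_n]] by [].
apply/setP => C; apply/imsetP/imsetP => -[s _ ->]; exists s => //; by rewrite ?H ?inE.
Qed.

Lemma g_cls c m : g c 1 m = #|[set cls c q | q in [set q : 'S_m | squished c 1 q]]|.
Proof.
rewrite /Defs.g.
suff -> : [set C in Defs.classes c m | [exists s in C, squished c 1 s]] = [set cls c q | q in [set q : 'S_m | squished c 1 q]] by [].
apply/setP => C; rewrite inE /Defs.classes.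
apply/andP/imsetP => [[/imsetP[s _ ->] /existsP[t /andP[ts sq]]] | [q]].
  exists t; first by rewrite inE.
  apply/setP => u; rewrite !inE equivb_E; move: ts; rewrite inE equivb_E.
  move=> /EbP H; apply/EbP/EbP => H'; [exact: E_trans (E_sym H) H' | exact: E_trans H H'].
rewrite inE => sq ->; split.
  apply/imsetP; exists q => //; apply/setP => u; by rewrite !inE equivb_E.
apply/existsP; exists q; rewrite sq inE andbT; apply/EbP; exact: E_refl.
Qed.

Lemma f_small c n : n < c.+1 -> f c n = n`!.
Proof.
move=> hn; rewrite f_cls.
rewrite (@card_imset_rel _ _ _ _ _ id) ?imset_id ?cardsT ?card_Sn // => s t _ _.
rewrite cls_eq; apply/EbP/eqP => [H | ->]; last exact: E_refl.
have H1 := @clos_rt_rt1n _ _ _ _ H; clear H.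
move: H1; move Hz : (word t) => z H1.
case: H1 Hz => [|y z0 st _] Hz; first by apply: word_inj.
exfalso; move: st => [a [b [u [v [e _ su _]]]]].
have := congr1 size e; rewrite size_word !size_cat su; lia.
Qed.


Section Fiber.
Variables (c n' : nat).
Local Notation n := n'.+1.

Definition pos (s : 'S_n) := index 1 (word s).
Definition pre (s : 'S_n) := take (pos s) (word s).
Definition suf (s : 'S_n) := drop (pos s) (word s).
Definition tl (s : 'S_n) := drop (pos s).+1 (word s).

Lemma mem_word (s : 'S_n) x : (x \in word s) = (0 < x <= n).
Proof. by rewrite (perm_mem (word_perm s)) mem_iota add1n ltnS. Qed.

Lemma one_in_word (s : 'S_n) : 1 \in word s.
Proof. by rewrite mem_word. Qed.

Lemma suf_eq (s : 'S_n) : suf s = 1 :: tl s.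
Proof.
by rewrite /suf /tl (drop_nth 0) ?index_mem ?one_in_word // nth_index // one_in_word.
Qed.

Lemma word_split (s : 'S_n) : word s = pre s ++ suf s.
Proof. by rewrite cat_take_drop. Qed.

Lemma word_uniq (s : 'S_n) : uniq (word s).
Proof. by rewrite (perm_uniq (word_perm s)) iota_uniq. Qed.

Lemma one_notin_pre (s : 'S_n) : 1 \notin pre s.
Proof.
have := word_uniq s; rewrite word_split suf_eq cat_uniq /= => /and3P[_ + _].
by rewrite negb_or => /andP[].
Qed.

Lemma pre_gt1 (s : 'S_n) : all (fun l => 1 < l) (pre s).
Proof.
apply/allP => x xp; have : x \in word s by rewrite word_split mem_cat xp.
rewrite mem_word => /andP[h _]; rewrite ltn_neqAle h andbT.
by apply/eqP => e; move: (one_notin_pre s); rewrite e xp.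
Qed.

Lemma tl_gt1 (s : 'S_n) : all (fun l => 1 < l) (tl s).
Proof.
apply/allP => x xp; have : x \in word s by rewrite word_split suf_eq mem_cat in_cons xp !orbT.
rewrite mem_word => /andP[h _]; rewrite ltn_neqAle h andbT.
have := word_uniq s; rewrite word_split suf_eq cat_uniq /= => /and3P[_ _ /andP[+ _]].
by apply: contra => /eqP ->.
Qed.

Lemma pre_of (s : 'S_n) p q : word s = p ++ 1 :: q -> 1 \notin p -> pre s = p /\ tl s = q.
Proof.
move=> e np; have hp : pos s = size p.
  by rewrite /pos e index_cat (negbTE np) /= addn0.
rewrite /pre /tl hp e take_size_cat //; split=> //.
by rewrite drop_cat ltnNge leqnSn /= subSn // subnn drop1.
Qed.

Lemma E_word (s t : 'S_n) :
  E c (word s) (word t) <-> E c (pre s) (pre t) /\ E c (suf s) (suf t).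
Proof.
split=> [H | [H1 H2]]; last by rewrite !word_split; exact: E_join.
move: H; rewrite {1}word_split suf_eq => /(E_split (pre_gt1 s) (tl_gt1 s)).
case=> p1 [q1 [e sp E1 E2]].
have np1 : 1 \notin p1.
  have := pre_gt1 s; rewrite (perm_all _ (E_perm E1)) => /allP h.
  by apply/negP => /h.
have [e1 e2] := pre_of e np1; by rewrite e1 !suf_eq e2.
Qed.

Definition Aset (s : 'S_n) : {set 'I_n} := [set i : 'I_n | (val i).+1 \in pre s].

Lemma Aset_E (s t : 'S_n) : E c (word s) (word t) -> Aset s = Aset t.
Proof.
case/E_word => /E_perm H _; apply/setP => i; by rewrite !inE (perm_mem H).
Qed.

Lemma ord0_Aset (s : 'S_n) : ord0 \notin Aset s.
Proof. by rewrite inE /= (negbTE (one_notin_pre s)). Qed.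

Lemma pre_mem (s : 'S_n) x : (x \in pre s) = (x \in SL (Aset s)).
Proof.
apply/idP/idP => [xp | /SL_range[i -> iA]]; last by move: iA; rewrite inE.
have : x \in word s by rewrite word_split mem_cat xp.
rewrite mem_word; case: x xp => // y xp; rewrite ltnS => hy.
by rewrite -[y]/(val (Ordinal hy)) mem_SL inE.
Qed.

Lemma suf_mem (s : 'S_n) x : (x \in suf s) = (x \in SL (~: Aset s)).
Proof.
have U : uniq (pre s ++ suf s) by rewrite -word_split word_uniq.
move: U; rewrite cat_uniq => /and3P[_ D _].
apply/idP/idP => [xs | /SL_range[i -> iA]].
  have : x \in word s by rewrite word_split mem_cat xs orbT.
  rewrite mem_word; case: x xs => // y xs; rewrite ltnS => hy.
  rewrite -[y]/(val (Ordinal hy)) mem_SL !inE; apply/negP => h.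
  by move/hasP: D; apply; exists y.+1.
have : (val i).+1 \in word s.
  by rewrite mem_word /=; exact: ltn_ord.
by rewrite word_split mem_cat; move: iA; rewrite !inE => /negbTE ->.
Qed.

Lemma pre_uniq (s : 'S_n) : uniq (pre s).
Proof. by have := word_uniq s; rewrite word_split cat_uniq => /andP[]. Qed.

Lemma suf_uniq (s : 'S_n) : uniq (suf s).
Proof. by have := word_uniq s; rewrite word_split cat_uniq => /and3P[]. Qed.

End Fiber.


Lemma sq1 c m (q : 'S_m) : squished c 1 q = (1 \in take 1 (word q)).
Proof.
apply/forallP/idP => [H | H j].
  by have := H (Ordinal (isT : 1 < 2)); rewrite /= muln0.
by case: j => [[|[|//]] hj] //=; rewrite muln0.
Qed.

Lemma relab_std_aux S w : all (mem S) w -> [seq nth 0 S x.-1 | x <- std S w] = w.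
Proof. exact: relab_std. Qed.

Lemma E_std c S x y : uniq S -> sorted ltn S -> perm_eq x S -> perm_eq y S ->
  E c x y <-> E c (std S x) (std S y).
Proof.
move=> uS sS px py; split => H.
  apply: (E_map (std_mono sS)) H; apply/allP => z; by rewrite (perm_mem px).
have H' := E_map (relab_mono sS) _ H.
have ax : all (mem S) x by apply/allP => z; rewrite (perm_mem px).
have ay : all (mem S) y by apply/allP => z; rewrite (perm_mem py).
rewrite -(relab_std_aux ax) -(relab_std_aux ay).
apply: H'; apply/allP => z; by rewrite (perm_mem (std_perm uS px)).
Qed.

Section Fiber2.
Variables (c n' : nat) (A : {set 'I_n'.+1}).
Local Notation n := n'.+1.
Local Notation SA := (SL A).
Local Notation SB := (SL (~: A)).
Local Notation k := #|A|.
Local Notation m := #|~: A|.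

Definition P (s : 'S_n) : 'S_k := permw k (std SA (pre s)).
Definition Q (s : 'S_n) : 'S_m := permw m (std SB (suf s)).

Lemma pre_perm (s : 'S_n) : Aset s = A -> perm_eq (pre s) SA.
Proof.
move=> hA; apply: uniq_perm; [exact: pre_uniq | exact: SL_uniq |].
by move=> x; rewrite pre_mem hA.
Qed.

Lemma suf_perm (s : 'S_n) : Aset s = A -> perm_eq (suf s) SB.
Proof.
move=> hA; apply: uniq_perm; [exact: suf_uniq | exact: SL_uniq |].
by move=> x; rewrite suf_mem hA.
Qed.

Lemma wordP (s : 'S_n) : Aset s = A -> word (P s) = std SA (pre s).
Proof.
move=> hA; rewrite permwK // -(size_SL A); apply: std_perm; [exact: SL_uniq | exact: pre_perm].
Qed.

Lemma wordQ (s : 'S_n) : Aset s = A -> word (Q s) = std SB (suf s).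
Proof.
move=> hA; rewrite permwK // -(size_SL (~: A)); apply: std_perm; [exact: SL_uniq | exact: suf_perm].
Qed.

Lemma key_eq (s t : 'S_n) : Aset s = A -> Aset t = A ->
  Eb c (word s) (word t) = Eb c (word (P s)) (word (P t)) && Eb c (word (Q s)) (word (Q t)).
Proof.
move=> hs ht; rewrite !wordP // !wordQ //.
apply/EbP/andP => [/E_word[H1 H2] | [/EbP H1 /EbP H2]].
  split; apply/EbP.
  - exact: (E_std c (SL_uniq A) (SL_sorted A) (pre_perm hs) (pre_perm ht)).1 H1.
  - exact: (E_std c (SL_uniq (~: A)) (SL_sorted (~: A)) (suf_perm hs) (suf_perm ht)).1 H2.
apply/E_word; split.
- exact: (E_std c (SL_uniq A) (SL_sorted A) (pre_perm hs) (pre_perm ht)).2 H1.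
- exact: (E_std c (SL_uniq (~: A)) (SL_sorted (~: A)) (suf_perm hs) (suf_perm ht)).2 H2.
Qed.

End Fiber2.


Section Fiber3.
Variables (c n' : nat) (A : {set 'I_n'.+1}).
Hypothesis hA0 : ord0 \notin A.
Local Notation n := n'.+1.
Local Notation SA := (SL A).
Local Notation SB := (SL (~: A)).
Local Notation k := #|A|.
Local Notation m := #|~: A|.

Lemma one_SB : 1 \in SB.
Proof. by rewrite -[1]/((val (ord0 : 'I_n)).+1) mem_SL inE hA0. Qed.

Lemma SB_index : index 1 SB = 0.
Proof.
case E: (index 1 SB) => [//|i]; exfalso.
have hi : i.+1 < size SB by rewrite -E index_mem one_SB.
have h0 : 0 < size SB by apply: leq_ltn_trans hi.
have := sorted_ltn_nth ltn_trans 0 (SL_sorted (~: A)) 0 i.+1.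
rewrite !inE => /(_ h0 hi (ltn0Sn i)); rewrite -E nth_index ?one_SB // ltnS leqn0 => /eqP e.
have : nth 0 SB 0 \in SB by rewrite mem_nth.
by rewrite e => /SL_range[j].
Qed.

Lemma SB_head : nth 0 SB 0 = 1.
Proof. by have := nth_index 0 one_SB; rewrite SB_index. Qed.

Definition construct (p : 'S_k) (q : 'S_m) : 'S_n :=
  permw n (relab SA (word p) ++ relab SB (word q)).

Lemma SAB_perm : perm_eq (SA ++ SB) (iota 1 n).
Proof.
apply: uniq_perm; last 1 first.
- move=> x; rewrite mem_cat mem_iota; apply/orP/idP.
    by case=> /SL_range[i -> _]; rewrite /= add1n ltnS; exact: ltn_ord.
  case: x => // y; rewrite add1n /= ltnS => hy.
  rewrite -[y]/(val (Ordinal hy)) !mem_SL inE; by case: (_ \in A); [left|right].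
- rewrite cat_uniq !SL_uniq andbT /=; apply/hasPn => x /SL_range[i -> iB].
  by rewrite mem_SL; move: iB; rewrite inE.
- exact: iota_uniq.
Qed.

Lemma v_perm (p : 'S_k) (q : 'S_m) :
  perm_eq (relab SA (word p) ++ relab SB (word q)) (iota 1 n).
Proof.
apply: perm_trans SAB_perm; apply: perm_cat; apply: relab_perm; rewrite size_SL; exact: word_perm.
Qed.

Lemma construct_word p q : word (construct p q) = relab SA (word p) ++ relab SB (word q).
Proof. exact: permwK (v_perm p q). Qed.

Lemma word_q (q : 'S_m) : squished c 1 q -> word q = 1 :: behead (word q).
Proof. by rewrite sq1; case: (word q) => [|x w] //=; rewrite take0 inE => /eqP <-. Qed.

Lemma relab_q (q : 'S_m) : squished c 1 q -> relab SB (word q) = 1 :: relab SB (behead (word q)).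
Proof. by move=> sq; rewrite {1}(word_q sq) /= SB_head. Qed.

Lemma mem_relabA (p : 'S_k) x : (x \in relab SA (word p)) = (x \in SA).
Proof. by rewrite (perm_mem (relab_perm _)) // size_SL word_perm. Qed.

Lemma one_notin_relabA (p : 'S_k) : 1 \notin relab SA (word p).
Proof. by rewrite mem_relabA -[1]/((val (ord0 : 'I_n)).+1) mem_SL. Qed.

Lemma construct_pre p q : squished c 1 q ->
  pre (construct p q) = relab SA (word p) /\ suf (construct p q) = relab SB (word q).
Proof.
move=> sq; have e := construct_word p q; rewrite (relab_q sq) in e.
have [e1 e2] := pre_of e (one_notin_relabA p).
by rewrite suf_eq e1 e2 (relab_q sq).
Qed.

Lemma construct_A p q : squished c 1 q -> Aset (construct p q) = A.
Proof.
move=> sq; apply/setP => i; rewrite inE (construct_pre p sq).1 mem_relabA; exact: mem_SL.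
Qed.

Lemma construct_P p q : squished c 1 q -> P A (construct p q) = p.
Proof.
move=> sq; rewrite /P (construct_pre p sq).1 std_relab ?word_permw ?SL_uniq //.
apply/allP => x; rewrite (perm_mem (word_perm p)) mem_iota size_SL add1n ltnS //.
Qed.

Lemma construct_Q p q : squished c 1 q -> Q A (construct p q) = q.
Proof.
move=> sq; rewrite /Q (construct_pre p sq).2 std_relab ?word_permw ?SL_uniq //.
apply/allP => x; rewrite (perm_mem (word_perm q)) mem_iota size_SL add1n ltnS //.
Qed.

Lemma fiber_card : #|[set cls c s | s in [set s : 'S_n | Aset s == A]]| = f c k * g c 1 m.
Proof.
rewrite (@card_imset_rel _ _ _ _ (@cls c n) (fun s => (cls c (P A s), cls c (Q A s)))); last first.
  move=> s t; rewrite !inE => /eqP hs /eqP ht; rewrite cls_eq xpair_eqE !cls_eq; exact: key_eq.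
rewrite f_cls g_cls -cardsX.
suff -> : [set (cls c (P A s), cls c (Q A s)) | s in [set s : 'S_n | Aset s == A]] =
  setX [set cls c s | s in [set: 'S_k]] [set cls c q | q in [set q : 'S_m | squished c 1 q]] by [].
apply/setP => -[X Y]; rewrite in_setX; apply/imsetP/andP.
- case=> s; rewrite inE => /eqP hs [-> ->]; split; first by apply: imset_f; rewrite inE.
  apply/imsetP; exists (Q A s) => //; rewrite inE sq1 wordQ // suf_eq /std /= SB_index.
  by rewrite mem_head.
- case=> /imsetP[p _ ->] /imsetP[q]; rewrite inE => sq ->.
  exists (construct p q); first by rewrite inE construct_A.
  by rewrite construct_P // construct_Q.
Qed.
End Fiber3.


Lemma f_sumA c n' : f c n'.+1 =
  \sum_(A : {set 'I_n'.+1}) (if ord0 \in A then 0 else f c #|A| * g c 1 (n'.+1 - #|A|)).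
Proof.
rewrite f_cls (@card_imset_part _ _ _ (@Aset n') (@cls c n'.+1)); last first.
  by move=> s t /eqP; rewrite cls_eq => /EbP; exact: Aset_E.
apply: eq_bigr => A _; case: ifP => hA.
  apply/eqP; rewrite cards_eq0 -subset0; apply/subsetP => C /imsetP[s].
  by rewrite inE => /eqP eA; move: (ord0_Aset s); rewrite eA hA.
rewrite fiber_card ?hA //; congr (_ * g c 1 _).
by rewrite cardsCs setCK card_ord.
Qed.

Lemma subC1 (T : finType) (x : T) (A : {set T}) : (A \subset [set~ x]) = (x \notin A).
Proof.
apply/subsetP/idP => [H | xA y yA]; first by apply/negP => /H; rewrite !inE eqxx.
by rewrite !inE; apply: contraNneq xA => <-.
Qed.

Lemma sum_comb n' (F : nat -> nat) :
  \sum_(A : {set 'I_n'.+1}) (if ord0 \in A then 0 else F #|A|) =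
  \sum_(k < n'.+2) F k * 'C(n', k).
Proof.
rewrite (partition_big (fun A : {set 'I_n'.+1} => (inord #|A| : 'I_n'.+2)) predT) //=.
apply: eq_bigr => k _.
rewrite (eq_bigl (fun A : {set 'I_n'.+1} => #|A| == k)); last first.
  move=> A /=; apply/eqP/eqP => [<- | e]; last by rewrite e inord_val.
  rewrite inordK //; have := max_card (mem A); rewrite card_ord ltnS //.
rewrite (eq_bigr (fun A : {set 'I_n'.+1} => if ord0 \notin A then F k else 0)); last first.
  by move=> A /eqP ->; case: (ord0 \in A).
rewrite -big_mkcondr sum_nat_const mulnC; congr (_ * _).
have := cards_draws [set~ (ord0 : 'I_n'.+1)] k; rewrite cardsC1 card_ord /= => <-.
apply: eq_card => A; by rewrite !inE subC1 andbC.
Qed.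

Lemma main_pos c n' : f c n'.+1 =
  \sum_(1 <= j < n'.+2) f c (j - 1) * g c 1 (n'.+1 - j + 1) * 'C(n'.+1 - 1, j - 1).
Proof.
rewrite f_sumA (sum_comb n' (fun k => f c k * g c 1 (n'.+1 - k))).
rewrite big_add1 /= big_ord_recr /= bin_small // muln0 addn0 big_mkord.
apply: eq_bigr => k _; have hk := ltn_ord k.
rewrite subSS subn0 subn1 /=; congr (f c k * g c 1 _ * _); lia.
Qed.


Theorem theorem3p4 (c : nat) (hc : 1 <= c) (n : nat) :
  f c n = if n < c.+1 then n`!
          else \sum_(1 <= j < n.+1) f c (j - 1) * g c 1 (n - j + 1) * 'C(n - 1, j - 1).
Proof.
case: ifP => hn; first exact: f_small.
case: n hn => [|n'] hn; first by rewrite ltn0Sn in hn.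
exact: main_pos.
Qed.
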